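(* Every formula of $\mathcal{L}(\Rightarrow)$ is provably equivalent in the Yalcin logic to a formula of $\mathcal{L}$; that is, for every $\varphi\in\mathcal{L}(\Rightarrow)$ there is $\varphi'\in\mathcal{L}$ such that $\varphi\leftrightarrow\varphi'$ is a theorem of the Yalcin logic.
   Context: The language $\mathcal{L}(\Rightarrow)$ is given by $\varphi::= p\mid \neg\varphi\mid (\varphi\wedge\varphi)\mid \Box\varphi \mid (\varphi\Rightarrow\varphi)$, with $p$ ranging over a fixed set of propositional variables; $\vee,\to,\leftrightarrow,\bot$ as usual and $\Diamond\varphi:=\neg\Box\neg\varphi$. $\mathcal{L}$ is the set of formulas not containing $\Rightarrow$. A formula is nonmodal if it contains neither $\Rightarrow$ nor $\Box$. The Yalcin logic is the smallest set of formulas of $\mathcal{L}(\Rightarrow)$ closed under replacement of equivalents (if $\alpha\leftrightarrow\beta$ is in the set and $\varphi'$ results from $\varphi$ by replacing an occurrence of $\alpha$ by $\beta$, then $\varphi\leftrightarrow\varphi'$ is in the set), modus ponens for $\to$, and necessitation for $\Box$, and containing all substitution instances of propositional tautologies and all instances of: K: $\Box(\varphi\to\psi)\to(\Box\varphi\to\Box\psi)$; 4: $\Diamond\Diamond\varphi\to\Diamond\varphi$; 5: $\Diamond\Box\varphi\to\Box\varphi$; I1: $(\varphi\Rightarrow\pi)\leftrightarrow\Box(\varphi\to\pi)$ for $\pi$ nonmodal; I2: $(\varphi\Rightarrow(\alpha\wedge\beta))\leftrightarrow((\varphi\Rightarrow\alpha)\wedge(\varphi\Rightarrow\beta))$; I3: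 $(\varphi\Rightarrow\alpha)\to(\varphi\Rightarrow(\alpha\vee\beta))$; I4: $(\varphi\Rightarrow\alpha)\to(\varphi\Rightarrow\Box\alpha)$; I5: $((\varphi\Rightarrow(\alpha\vee\Box\beta))\wedge\neg(\varphi\Rightarrow\beta))\to(\varphi\Rightarrow\alpha)$; I6: $((\varphi\Rightarrow(\alpha\vee\Diamond\beta))\wedge(\varphi\Rightarrow\neg\beta))\to(\varphi\Rightarrow\alpha)$; I7: $\neg(\varphi\Rightarrow\beta)\to(\varphi\Rightarrow\Diamond\neg\beta)$. *)

(* Defs.v *)
From Stdlib Require Import Bool.

Set Implicit Arguments.

Inductive form (V : Type) : Type :=
| Var  : V -> form V
| Neg  : form V -> form V
| And  : form V -> form V -> form V
| Box  : form V -> form V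
| Cond : form V -> form V -> form V.

Arguments Var {V} _.
Arguments Neg {V} _.
Arguments And {V} _ _.
Arguments Box {V} _.
Arguments Cond {V} _ _.

Section Derived.
Variable V : Type.
Definition Or  (a b : form V) : form V := Neg (And (Neg a) (Neg b)).
Definition Imp (a b : form V) : form V := Neg (And a (Neg b)).
Definition Iff (a b : form V) : form V := And (Imp a b) (Imp b a).
Definition Dia (a : form V) : form V := Neg (Box (Neg a)).

Fixpoint in_L (a : form V) : Prop :=
  match a with
  | Var _ => True
  | Neg b => in_L b
  | And b c => in_L b /\ in_L c
  | Box b => in_L b
  | Cond _ _ => False
  end.

Fixpoint nonmodal (a : form V) : Prop :=
  match a with
  | Var _ => True
  | Neg b => nonmodal b
  | And b c => nonmodal b /\ nonmodal c
  | Box _ => False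
  | Cond _ _ => False
  end.

Fixpoint peval (v : form V -> bool) (a : form V) : bool :=
  match a with
  | Var _ => v a
  | Neg b => negb (peval v b)
  | And b c => peval v b && peval v c
  | Box _ => v a
  | Cond _ _ => v a
  end.

(* Substitution instances of propositional tautologies: formulas true under every
   Boolean valuation of their maximal non-Boolean subformulas. *)
Definition taut_instance (a : form V) : Prop := forall v, peval v a = true.

Inductive repl (a b : form V) : form V -> form V -> Prop :=
| repl_here : repl a b a b
| repl_neg  : forall p p', repl a b p p' -> repl a b (Neg p) (Neg p')
| repl_andl : forall p p' q, repl a b p p' -> repl a b (And p q) (And p' q)
| repl_andr : forall p q q', repl a b q q' -> repl a b (And p q) (And p q')
| repl_box  : forall p p', repl a b p p' -> repl a b (Box p) (Box p')
| repl_condl : forall p p' q, repl a b p p' -> repl a b (Cond p q) (Cond p' q)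
| repl_condr : forall p q q', repl a b q q' -> repl a b (Cond p q) (Cond p q').

Inductive yalcin : form V -> Prop :=
| Y_taut : forall a, taut_instance a -> yalcin a
| Y_K : forall a b, yalcin (Imp (Box (Imp a b)) (Imp (Box a) (Box b)))
| Y_4 : forall a, yalcin (Imp (Dia (Dia a)) (Dia a))
| Y_5 : forall a, yalcin (Imp (Dia (Box a)) (Box a))
| Y_I1 : forall a p, nonmodal p -> yalcin (Iff (Cond a p) (Box (Imp a p)))
| Y_I2 : forall f a b, yalcin (Iff (Cond f (And a b)) (And (Cond f a) (Cond f b)))
| Y_I3 : forall f a b, yalcin (Imp (Cond f a) (Cond f (Or a b)))
| Y_I4 : forall f a, yalcin (Imp (Cond f a) (Cond f (Box a)))
| Y_I5 : forall f a b,
    yalcin (Imp (And (Cond f (Or a (Box b))) (Neg (Cond f b))) (Cond f a))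
| Y_I6 : forall f a b,
    yalcin (Imp (And (Cond f (Or a (Dia b))) (Cond f (Neg b))) (Cond f a))
| Y_I7 : forall f b, yalcin (Imp (Neg (Cond f b)) (Cond f (Dia (Neg b))))
| Y_MP : forall a b, yalcin (Imp a b) -> yalcin a -> yalcin b
| Y_Nec : forall a, yalcin a -> yalcin (Box a)
| Y_RE : forall a b p p', yalcin (Iff a b) -> repl a b p p' -> yalcin (Iff p p').
End Derived.

(* Main.v *)
Require Import Defs.
From Stdlib Require Import Bool List Arith Lia.
Import ListNotations.

Ltac tt := unfold taut_instance; let v := fresh "v" in intro v; cbn [peval Imp Iff Or Dia];
  repeat (match goal with |- context [?w ?x] =>
    lazymatch type of w with form _ -> bool => destruct (w x) end end); reflexivity.

Lemma mp1 {V} (a b : form V) : taut_instance (Imp a b) -> yalcin a -> yalcin b.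
Proof. intros H Ha. exact (Y_MP (Y_taut H) Ha). Qed.

Lemma mp2 {V} (a b c : form V) : taut_instance (Imp a (Imp b c)) ->
  yalcin a -> yalcin b -> yalcin c.
Proof. intros H Ha Hb. exact (Y_MP (Y_MP (Y_taut H) Ha) Hb). Qed.

Lemma mp3 {V} (a b c d : form V) : taut_instance (Imp a (Imp b (Imp c d))) ->
  yalcin a -> yalcin b -> yalcin c -> yalcin d.
Proof. intros H Ha Hb Hc. exact (Y_MP (Y_MP (Y_MP (Y_taut H) Ha) Hb) Hc). Qed.

Lemma iff_trans {V} (a b c : form V) : yalcin (Iff a b) -> yalcin (Iff b c) -> yalcin (Iff a c).
Proof. apply mp2. tt. Qed.

Lemma iff_refl {V} (a : form V) : yalcin (Iff a a).
Proof. apply Y_taut. tt. Qed.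

Lemma cond_re {V} (f a b : form V) : yalcin (Iff a b) -> yalcin (Iff (Cond f a) (Cond f b)).
Proof. intro H. exact (Y_RE H (repl_condr f (repl_here a b))). Qed.

Lemma cond_taut {V} (f a b : form V) : taut_instance (Iff a b) -> yalcin (Iff (Cond f a) (Cond f b)).
Proof. intro H. apply cond_re, Y_taut, H. Qed.

Lemma D1 {V} (f al R : form V) :
  yalcin (Iff (Cond f (Or (Box al) R)) (Or (Cond f al) (Cond f R))).
Proof.
  assert (C : yalcin (Iff (Cond f (Or (Box al) R)) (Cond f (Or R (Box al))))) by (apply cond_taut; tt).
  pose proof (Y_I5 f R al) as H5.
  pose proof (Y_I4 f al) as H4.
  pose proof (Y_I3 f (Box al) R) as H3a.
  pose proof (Y_I3 f R (Box al)) as H3b.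
  assert (A : yalcin (Imp (Cond f (Or (Box al) R)) (Or (Cond f al) (Cond f R)))).
  { revert C H5. apply mp2. tt. }
  assert (B : yalcin (Imp (Cond f al) (Cond f (Or (Box al) R)))).
  { revert H4 H3a. apply mp2. tt. }
  assert (B2 : yalcin (Imp (Cond f R) (Cond f (Or (Box al) R)))).
  { revert C H3b. apply mp2. tt. }
  revert A B B2. apply mp3. tt.
Qed.

Lemma D2 {V} (f al R : form V) :
  yalcin (Iff (Cond f (Or (Neg (Box al)) R)) (Or (Neg (Cond f al)) (Cond f R))).
Proof.
  assert (E : yalcin (Iff (Box al) (Box (Neg (Neg al))))).
  { apply (Y_RE (a := al) (b := Neg (Neg al))). apply Y_taut; tt. apply repl_box, repl_here. }
  assert (C1 : yalcin (Iff (Cond f (Or (Neg (Box al)) R)) (Cond f (Or R (Dia (Neg al)))))).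
  { apply cond_re. revert E. apply mp1. unfold Dia. tt. }
  assert (C2 : yalcin (Iff (Cond f (Or (Neg (Box al)) R)) (Cond f (Or (Dia (Neg al)) R)))).
  { apply cond_re. revert E. apply mp1. unfold Dia. tt. }
  assert (C3 : yalcin (Iff (Cond f al) (Cond f (Neg (Neg al))))) by (apply cond_taut; tt).
  pose proof (Y_I6 f R (Neg al)) as H6.
  pose proof (Y_I7 f al) as H7.
  pose proof (Y_I3 f (Dia (Neg al)) R) as H3a.
  pose proof (Y_I3 f R (Dia (Neg al))) as H3b.
  assert (A : yalcin (Imp (Cond f (Or (Neg (Box al)) R)) (Or (Neg (Cond f al)) (Cond f R)))).
  { revert C1 C3 H6. apply mp3. tt. }
  assert (B : yalcin (Imp (Neg (Cond f al)) (Cond f (Or (Neg (Box al)) R)))).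
  { revert H7 H3a C2. apply mp3. tt. }
  assert (B2 : yalcin (Imp (Cond f R) (Cond f (Or (Neg (Box al)) R)))).
  { revert C1 H3b. apply mp2. tt. }
  revert A B B2. apply mp3. tt.
Qed.

Definition lit {V} (l : bool * form V) := if fst l then snd l else Neg (snd l).

Fixpoint cl {V} (p : form V) (G : list (bool * form V)) : form V :=
  match G with [] => p | l :: G' => Or (lit l) (cl p G') end.

Fixpoint fsize {V} (a : form V) : nat :=
  match a with
  | Var _ => 1
  | Neg b => S (fsize b)
  | And b c => S (fsize b + fsize c)
  | Box b => S (fsize b)
  | Cond b c => S (fsize b + fsize c)
  end.

Fixpoint msr {V} (G : list (bool * form V)) : nat :=
  match G with [] => 0 | l :: G' => fsize (snd l) + msr G' end.

Fixpoint clv {V} (v : form V -> bool) (G : list (bool * form V)) : bool :=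
  match G with [] => false | l :: G' => peval v (lit l) || clv v G' end.

Lemma pcl {V} v (p : form V) G : peval v (cl p G) = clv v G || peval v p.
Proof.
  induction G as [|l G IH]; simpl. reflexivity.
  rewrite IH. destruct (peval v (lit l)), (clv v G), (peval v p); reflexivity.
Qed.

Lemma move_taut {V} (x p : form V) G :
  taut_instance (Iff (Or x (cl p G)) (cl (Or x p) G)).
Proof.
  unfold taut_instance; intro v. cbn [peval Imp Iff Or]. rewrite !pcl. cbn [peval Or].
  destruct (peval v x), (clv v G), (peval v p); reflexivity.
Qed.

Definition bot {V} (x : V) : form V := And (Var x) (Neg (Var x)).

Lemma nonmodal_L {V} (a : form V) : nonmodal a -> in_L a.
Proof. induction a; simpl; tauto. Qed.

Lemma red {V} (x0 : V) (f : form V) : in_L f -> forall n G p,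
  msr G < n -> Forall (fun l => in_L (snd l)) G -> nonmodal p ->
  exists chi, in_L chi /\ yalcin (Iff (Cond f (cl p G)) chi).
Proof.
  intros Hf n. induction n as [|n IH]; intros G p Hn HG Hp. lia.
  destruct G as [|[b x] G].
  - exists (Box (Imp f p)). split.
    + simpl. split; [exact Hf|]. apply nonmodal_L; exact Hp.
    + simpl. apply Y_I1; exact Hp.
  - inversion HG as [|? ? Hx HG']; subst. simpl in Hx, Hn.
    destruct x as [q|y|a c|al|a c]; simpl in Hn.
    +
      destruct (IH G (Or (lit (b, Var q)) p)) as [chi [Hc Hy]]; [lia|exact HG'|destruct b; unfold lit; simpl; tauto|].
      exists chi. split; [exact Hc|]. eapply iff_trans; [|exact Hy].
      apply cond_taut. apply move_taut.
    + destruct (IH ((negb b, y) :: G) p) as [chi [Hc Hy]]; [simpl; lia|constructor; assumption|exact Hp|].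
      exists chi. split; [exact Hc|]. eapply iff_trans; [|exact Hy].
      apply cond_taut. simpl. unfold lit; destruct b; simpl; tt.
    + destruct Hx as [Ha Hc0]. destruct b.
      * destruct (IH ((true, a) :: G) p) as [c1 [Hc1 Hy1]]; [simpl; lia|constructor; assumption|exact Hp|].
        destruct (IH ((true, c) :: G) p) as [c2 [Hc2 Hy2]]; [simpl; lia|constructor; assumption|exact Hp|].
        exists (And c1 c2). split; [simpl; tauto|].
        eapply iff_trans.
        { apply (cond_taut f _ (And (cl p ((true, a) :: G)) (cl p ((true, c) :: G)))). simpl. unfold lit; simpl. tt. }
        eapply iff_trans; [apply Y_I2|].
        revert Hy1 Hy2. apply mp2. tt.
      * destruct (IH ((false, a) :: (false, c) :: G) p) as [c1 [Hc1 Hy1]]; [simpl; lia|repeat constructor; assumption|exact Hp|].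
        exists c1. split; [exact Hc1|]. eapply iff_trans; [|exact Hy1].
        apply cond_taut. simpl. unfold lit; simpl. tt.
    + destruct (IH [(true, al)] (bot x0)) as [c1 [Hc1 Hy1]]; [simpl; lia|repeat constructor; assumption|simpl; tauto|].
      destruct (IH G p) as [c2 [Hc2 Hy2]]; [lia|assumption|exact Hp|].
      assert (E : yalcin (Iff (Cond f al) c1)).
      { eapply iff_trans; [|exact Hy1]. apply cond_taut. simpl. unfold lit, bot; simpl. tt. }
      destruct b.
      * exists (Or c1 c2). split; [simpl; tauto|].
        change (cl p ((true, Box al) :: G)) with (Or (Box al) (cl p G)); eapply iff_trans; [apply D1|]. revert E Hy2. apply mp2. tt.
      * exists (Or (Neg c1) c2). split; [simpl; tauto|].
        change (cl p ((false, Box al) :: G)) with (Or (Neg (Box al)) (cl p G)); eapply iff_trans; [apply D2|]. revert E Hy2. apply mp2. tt.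
    + destruct Hx.
Qed.

Fixpoint fvar {V} (a : form V) : V :=
  match a with
  | Var x => x
  | Neg b => fvar b
  | And b _ => fvar b
  | Box b => fvar b
  | Cond b _ => fvar b
  end.

Theorem lemma6 (V : Type) (phi : form V) :
  exists phi' : form V, in_L phi' /\ yalcin (Iff phi phi').
Proof.
  induction phi as [q|a [a' [Ha Ya]]|a [a' [Ha Ya]] c [c' [Hc Yc]]|a [a' [Ha Ya]]|a [a' [Ha Ya]] c [c' [Hc Yc]]].
  - exists (Var q). split; [exact I|apply iff_refl].
  - exists (Neg a'). split; [exact Ha|]. exact (Y_RE Ya (repl_neg (repl_here _ _))).
  - exists (And a' c'). split; [simpl; tauto|]. revert Ya Yc. apply mp2. tt.
  - exists (Box a'). split; [exact Ha|]. exact (Y_RE Ya (repl_box (repl_here _ _))).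
  - destruct (red (fvar a) a' Ha (S (fsize c')) [(true, c')] (bot (fvar a)))
      as [chi [Hchi Ychi]]; [simpl; lia|repeat constructor; assumption|simpl; tauto|].
    exists chi. split; [exact Hchi|].
    eapply iff_trans. exact (Y_RE Ya (repl_condl c (repl_here _ _))).
    eapply iff_trans. exact (Y_RE Yc (repl_condr a' (repl_here _ _))).
    eapply iff_trans; [|exact Ychi].
    apply cond_taut. simpl. unfold lit, bot; simpl. tt.
Qed.
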